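(* Let $R$ and $S$ be commutative rings with identity, $f:R\to S$ a surjective ring homomorphism, and $J$ a nonzero proper ideal of $S$. Then $R\bowtie^f J$ is a properly zipped ring if and only if $R$ is a properly zipped ring.
   Context: $R\bowtie^f J:=\{(r,f(r)+j)\mid r\in R,\ j\in J\}$, a subring of $R\times S$. A commutative ring $A$ is properly zipped if whenever a prime ideal $\mathfrak{p}$ of $A$ contains the intersection of a family $\{\mathfrak{p}_i\}_i$ of prime ideals of $A$, then $\mathfrak{p}_i\subseteq\mathfrak{p}$ for some $i$. *)

(* Defs.v *)
From HB Require Import structures.
From mathcomp Require Import all_boot all_algebra.
Set Implicit Arguments. Unset Strict Implicit. Unset Printing Implicit Defensive.
Import GRing.Theory.
Local Open Scope ring_scope.

(* Subsets of a carrier are represented as predicates T -> Prop.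
   A is a subring of the commutative ring T (e.g. T itself, or R ⋈^f J
   inside R × S); ideals / prime ideals are those of the ring A. *)

Definition is_ideal_in (T : comNzRingType) (A P : T -> Prop) : Prop :=
  (forall x, P x -> A x) /\ P 0 /\
  (forall x y, P x -> P y -> P (x + y)) /\
  (forall a x, A a -> P x -> P (a * x)).

Definition is_prime_ideal_in (T : comNzRingType) (A P : T -> Prop) : Prop :=
  is_ideal_in A P /\ ~ P 1 /\
  (forall a b, A a -> A b -> P (a * b) -> P a \/ P b).

Definition properly_zipped_in (T : comNzRingType) (A : T -> Prop) : Prop :=
  forall (I : Type) (p : T -> Prop) (q : I -> T -> Prop),
    is_prime_ideal_in A p ->
    (forall i, is_prime_ideal_in A (q i)) ->
    (forall x, A x -> (forall i, q i x) -> p x) ->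
    exists i, forall x, q i x -> p x.

Definition properly_zipped (T : comNzRingType) : Prop :=
  properly_zipped_in (fun _ : T => True).

Definition is_ideal (S : comNzRingType) (J : S -> Prop) : Prop :=
  is_ideal_in (fun _ : S => True) J.

Definition amalgamation (R S : comNzRingType) (f : {rmorphism R -> S})
  (J : S -> Prop) : R * S -> Prop :=
  fun x => exists r j, J j /\ x = (r, f r + j).

(* Main.v *)
Require Import Defs.
From HB Require Import structures.
From mathcomp Require Import all_boot all_algebra.
Local Open Scope ring_scope.
From Stdlib Require Import Classical.
Import GRing.Theory.
Set Implicit Arguments. Unset Strict Implicit.

Definition subr_ok (T : comNzRingType) (A : T -> Prop) :=
  A 0 /\ A 1 /\ (forall x y, A x -> A y -> A (x + y)) /\
  (forall x, A x -> A (- x)) /\ (forall x y, A x -> A y -> A (x * y)).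

Definition morph_ok (T U : comNzRingType) (g : T -> U) :=
  g 0 = 0 /\ g 1 = 1 /\ (forall x y, g (x + y) = g x + g y) /\
  (forall x, g (- x) = - g x) /\ (forall x y, g (x * y) = g x * g y).

Definition onto_ok (T U : comNzRingType) (A : T -> Prop) (B : U -> Prop) (g : T -> U) :=
  (forall x, A x -> B (g x)) /\ (forall y, B y -> exists x, A x /\ g x = y).

Definition zipped_rel (T : comNzRingType) (A K : T -> Prop) :=
  forall (I : Type) (p : T -> Prop) (q : I -> T -> Prop),
    is_prime_ideal_in A p ->
    (forall i, is_prime_ideal_in A (q i)) ->
    (forall x, K x -> p x) -> (forall i x, K x -> q i x) ->
    (forall x, A x -> (forall i, q i x) -> p x) ->
    exists i, forall x, q i x -> p x.

Lemma pull_prime (T U : comNzRingType) (A : T -> Prop) (B : U -> Prop) (g : T -> U) P :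
  subr_ok A -> morph_ok g -> onto_ok A B g -> is_prime_ideal_in B P ->
  is_prime_ideal_in A (fun x => A x /\ P (g x)).
Proof.
move=> [A0 [A1 [AD [AN AM]]]] [g0 [g1 [gD [gN gM]]]] [gAB _] [[PB [P0 [PD PM]]] [P1 Pp]].
split; [split; [|split; [|split]]|split].
- by move=> x [].
- by rewrite g0.
- by move=> x y [Ax Px] [Ay Py]; split; [apply: AD|rewrite gD; apply: PD].
- by move=> a x Aa [Ax Px]; split; [apply: AM|rewrite gM; apply: PM => //; apply: gAB].
- by rewrite g1 => -[].
- move=> a b Aa Ab [_]; rewrite gM => /Pp [||H|H]; try apply: gAB => //.
  + by left.
  + by right.
Qed.

Lemma push_key (T U : comNzRingType) (A : T -> Prop) (g : T -> U) P x y :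
  subr_ok A -> morph_ok g -> is_prime_ideal_in A P ->
  (forall z, A z /\ g z = 0 -> P z) ->
  A x -> P y -> g x = g y -> P x.
Proof.
move=> [A0 [A1 [AD [AN AM]]]] [g0 [g1 [gD [gN gM]]]] [[PA [P0 [PD PM]]] _] KP Ax Py gxy.
have -> : x = (x + - y) + y by rewrite addrNK.
apply: PD => //; apply: KP; split; first by apply: AD => //; apply: AN; apply: PA.
by rewrite gD gN gxy subrr.
Qed.

Lemma push_prime (T U : comNzRingType) (A : T -> Prop) (B : U -> Prop) (g : T -> U) P :
  subr_ok A -> morph_ok g -> onto_ok A B g -> is_prime_ideal_in A P ->
  (forall z, A z /\ g z = 0 -> P z) ->
  is_prime_ideal_in B (fun y => exists x, P x /\ g x = y).
Proof.
move=> sA mg [gAB gon] PP KP.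
have key := push_key sA mg PP KP.
move: (sA) (mg) (PP) => [A0 [A1 [AD [AN AM]]]] [g0 [g1 [gD [gN gM]]]] [[PA [P0 [PD PM]]] [P1 Pp]].
split; [split; [|split; [|split]]|split].
- by move=> y [x [Px <-]]; apply: gAB; apply: PA.
- by exists 0; rewrite g0.
- by move=> _ _ [x [Px <-]] [y [Py <-]]; exists (x + y); rewrite gD; split => //; apply: PD.
- move=> b _ Bb [x [Px <-]]; have [a [Aa <-]] := gon b Bb.
  by exists (a * x); rewrite gM; split => //; apply: PM.
- move=> [x [Px gx]]; apply: P1; apply: (key 1 x) => //; by rewrite g1.
- move=> a' b' Ba Bb [x [Px gx]].
  have [a [Aa ga]] := gon a' Ba; have [b [Ab gb]] := gon b' Bb.
  have Pab : P (a * b) by apply: (key _ x) => //; [apply: AM|rewrite gM ga gb].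
  have [H|H] := Pp a b Aa Ab Pab.
  + by left; exists a.
  + by right; exists b.
Qed.

Lemma T1 (T U : comNzRingType) (A : T -> Prop) (B : U -> Prop) (g : T -> U) :
  subr_ok A -> morph_ok g -> onto_ok A B g ->
  properly_zipped_in A -> properly_zipped_in B.
Proof.
move=> sA mg og zA I p q pp qp H.
have [i Hi] := zA I (fun x => A x /\ p (g x)) (fun i x => A x /\ q i (g x))
  (pull_prime sA mg og pp) (fun i => pull_prime sA mg og (qp i))
  (fun x Ax Hq => conj Ax (H (g x) (proj1 og x Ax) (fun i => proj2 (Hq i)))).
exists i => y qy.
have [[qB _] _] := qp i.
have [x [Ax gx]] := proj2 og y (qB y qy).
subst y; by case: (Hi x (conj Ax qy)).
Qed.

Lemma T2 (T U : comNzRingType) (A : T -> Prop) (B : U -> Prop) (g : T -> U) :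
  subr_ok A -> morph_ok g -> onto_ok A B g ->
  properly_zipped_in B -> zipped_rel A (fun x => A x /\ g x = 0).
Proof.
move=> sA mg og zB I p q pp qp Kp Kq H.
have Hsub : forall y, B y -> (forall i, exists x, q i x /\ g x = y) -> exists x, p x /\ g x = y.
  move=> y By Hq; have [x [Ax gx]] := proj2 og y By.
  exists x; split => //; apply: H => // i.
  have [x' [qx' gx']] := Hq i.
  apply: (push_key sA mg (qp i) (Kq i) Ax qx'); by rewrite gx gx'.
have [i Hi] := zB I (fun y => exists x, p x /\ g x = y) (fun i y => exists x, q i x /\ g x = y)
  (push_prime sA mg og pp Kp) (fun i => push_prime sA mg og (qp i) (Kq i)) Hsub.
exists i => x qx.
have [[qA _] _] := qp i.
have [x' [px' gx']] := Hi (g x) (ex_intro _ x (conj qx erefl)).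
by apply: (push_key sA mg pp Kp (qA x qx) px').
Qed.

Lemma T3 (T : comNzRingType) (A K1 K2 : T -> Prop) :
  (forall x, K1 x -> A x) -> (forall x, K2 x -> A x) ->
  (forall x y, A x -> A y -> A (x * y)) ->
  (forall P, is_prime_ideal_in A P -> (forall x, K1 x -> P x) \/ (forall x, K2 x -> P x)) ->
  zipped_rel A K1 -> zipped_rel A K2 -> properly_zipped_in A.
Proof.
move=> K1A K2A AM dich z1 z2 I p q pp qp H.
have [[pA [p0 [pD pM]]] [p1 pP]] := pp.
pose Q1 := fun i => forall x, K1 x -> q i x.
have [C1|C1] := classic (forall x, A x -> (forall i, Q1 i -> q i x) -> p x).
  have [[i Qi] Hi] := z1 {i | Q1 i} p (fun j => q (proj1_sig j)) pp
    (fun j => qp (proj1_sig j)) (fun x Kx => C1 x (K1A x Kx) (fun i Qi => Qi x Kx))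
    (fun j => proj2_sig j) (fun x Ax Hx => C1 x Ax (fun i Qi => Hx (exist _ i Qi))).
  by exists i.
have Q2 : forall i, ~ Q1 i -> forall x, K2 x -> q i x.
  by move=> i nQ; case: (dich _ (qp i)).
have [C2|C2] := classic (forall x, A x -> (forall i, ~ Q1 i -> q i x) -> p x).
  have [[i Qi] Hi] := z2 {i | ~ Q1 i} p (fun j => q (proj1_sig j)) pp
    (fun j => qp (proj1_sig j)) (fun x Kx => C2 x (K2A x Kx) (fun i Qi => Q2 i Qi x Kx))
    (fun j => Q2 _ (proj2_sig j)) (fun x Ax Hx => C2 x Ax (fun i Qi => Hx (exist _ i Qi))).
  by exists i.
exfalso.
have [x Hx] := not_all_ex_not _ _ C1.
have [Ax Hx'] := imply_to_and _ _ Hx.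
have [Hqx npx] := imply_to_and _ _ Hx'.
have [y Hy] := not_all_ex_not _ _ C2.
have [Ay Hy'] := imply_to_and _ _ Hy.
have [Hqy npy] := imply_to_and _ _ Hy'.
have pxy : p (x * y).
  apply: H; first exact: AM.
  move=> i; have [[_ [_ [_ qM]]] _] := qp i.
  case: (classic (Q1 i)) => Qi.
    by rewrite mulrC; apply: qM => //; apply: Hqx.
  by apply: qM => //; apply: Hqy.
by case: (pP x y Ax Ay pxy).
Qed.

Lemma pair_eq (R S : comNzRingType) (a : R) (b : S) (x : R * S) :
  x.1 = a -> x.2 = b -> x = (a, b).
Proof. by case: x => ? ? /= -> ->. Qed.

Lemma amal_sub (R S : comNzRingType) (f : {rmorphism R -> S}) (J : S -> Prop) :
  is_ideal J -> subr_ok (amalgamation f J).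
Proof.
move=> [_ [J0 [JD JM]]].
have JN : forall j, J j -> J (- j) by move=> j Jj; rewrite -mulN1r; apply: JM.
split; [|split; [|split; [|split]]].
- by exists 0, 0; split => //; apply: pair_eq => //=; rewrite rmorph0 addr0.
- by exists 1, 0; split => //; apply: pair_eq => //=; rewrite rmorph1 addr0.
- move=> _ _ [r [j [Jj ->]]] [r' [j' [Jj' ->]]].
  exists (r + r'), (j + j'); split; first exact: JD.
  by apply: pair_eq => //=; rewrite rmorphD addrACA.
- move=> _ [r [j [Jj ->]]].
  exists (- r), (- j); split; first exact: JN.
  by apply: pair_eq => //=; rewrite rmorphN opprD.
- move=> _ _ [r [j [Jj ->]]] [r' [j' [Jj' ->]]].
  exists (r * r'), (f r * j' + j * f r' + j * j'); split.
    apply: (JD); [apply: (JD)|]; [exact: JM|rewrite mulrC; exact: JM|exact: JM].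
  apply: pair_eq => //=; rewrite rmorphM.
  by rewrite mulrDl !mulrDr !addrA.
Qed.

Theorem theorem4p7 (R S : comNzRingType) (f : {rmorphism R -> S})
  (J : S -> Prop) :
  (forall s : S, exists r : R, f r = s) ->
  is_ideal J ->
  (exists j, J j /\ j <> 0) ->
  ~ J 1 ->
  (properly_zipped_in (amalgamation f J) <-> properly_zipped R).
Proof.
move=> fsurj Jid _ _.
have sA := amal_sub f Jid.
have [J0 _] := proj2 Jid.
have sT : forall T : comNzRingType, subr_ok (fun _ : T => True) by move=> T; do ! split.
have m1 : morph_ok (fun x : R * S => x.1) by do ! split.
have m2 : morph_ok (fun x : R * S => x.2) by do ! split.
have mf : morph_ok f.
  split; [exact: rmorph0|split; [exact: rmorph1|split; [exact: rmorphD|split; [exact: rmorphN|exact: rmorphM]]]].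
have o1 : onto_ok (amalgamation f J) (fun _ : R => True) (fun x : R * S => x.1).
  split => // y _; exists (y, f y); split => //; exists y, 0; split => //.
  by rewrite addr0.
have o2 : onto_ok (amalgamation f J) (fun _ : S => True) (fun x : R * S => x.2).
  split => // y _; have [r <-] := fsurj y; exists (r, f r); split => //; exists r, 0; split => //.
  by rewrite addr0.
have oF : onto_ok (fun _ : R => True) (fun _ : S => True) f.
  by split => // y _; have [r <-] := fsurj y; exists r.
split.
  exact: T1 sA m1 o1.
move=> zR.
have zS : properly_zipped S := T1 (sT R) mf oF zR.
have z1 := T2 sA m1 o1 zR.
have z2 := T2 sA m2 o2 zS.
have [_ [_ [_ [_ AM]]]] := sA.
apply: (T3 _ _ AM _ z1 z2); try by move=> x [].
move=> P [[PA [P0 _]] [_ Pp]].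
case: (classic (forall x, amalgamation f J x /\ x.1 = 0 -> P x)) => H; first by left.
right => y [Ay y2].
have [x Hx] := not_all_ex_not _ _ H.
have [[Ax x1] npx] := imply_to_and _ _ Hx.
have xy0 : x * y = 0.
  by case: x x1 {Hx npx Ax} => x1' x2 /= ->; case: y y2 {Ay} => y1 y2' /= ->;
     apply: pair_eq => /=; rewrite ?mul0r ?mulr0.
have : P (x * y) by rewrite xy0.
by case/(Pp _ _ Ax Ay).
Qed.
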